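(* Let $E$ be a Banach lattice and let $T\colon E\to E$ be an order bounded, disjoint preserving operator which is $uaw$-Dunford-Pettis. Then the modulus $|T|$ of $T$ exists and is $uaw$-Dunford-Pettis.
   Context: A net $(x_\alpha)$ in a Banach lattice $E$ is $uaw$-convergent to $x$ if $|x_\alpha-x|\wedge u\to 0$ weakly for every $u\in E_+$. A bounded operator $T\colon E\to E$ is $uaw$-Dunford-Pettis if every norm bounded $uaw$-null sequence $(x_n)$ in $E$ satisfies $\|Tx_n\|\to 0$. An operator $T$ is disjoint preserving if $x\perp y$ implies $Tx\perp Ty$. *)

(* Defs.v *)
From HB Require Import structures.
From mathcomp Require Import all_boot all_order all_algebra.
From mathcomp Require Import all_classical all_reals all_analysis.
Set Implicit Arguments. Unset Strict Implicit. Unset Printing Implicit Defensive.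
Import Order.TTheory GRing.Theory Num.Theory.
Import numFieldNormedType.Exports.
Local Open Scope classical_set_scope.
Local Open Scope ring_scope.

Section BanachLattice.
Variables (R : realType) (E : completeNormedModType R).
Variables (le : E -> E -> Prop) (join : E -> E -> E).

Definition lmeet (x y : E) : E := - join (- x) (- y).
Definition labs (x : E) : E := join x (- x).
Definition disjoint (x y : E) : Prop := lmeet (labs x) (labs y) = 0.

Definition is_banach_lattice : Prop :=
  [/\ (forall x, le x x),
      (forall x y, le x y -> le y x -> x = y),
      (forall x y z, le x y -> le y z -> le x z),
      (forall x y, le x (join x y) /\ le y (join x y)
         /\ forall z, le x z -> le y z -> le (join x y) z)
    & [/\ (forall x y z, le x y -> le (x + z) (y + z)),
           (forall (a : R) x y, 0 <= a -> le x y -> le (a *: x) (a *: y))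
         & (forall x y, le (labs x) (labs y) -> `|x| <= `|y|)]].

Definition linear_op (T : E -> E) : Prop :=
  forall (a : R) x y, T (a *: x + y) = a *: T x + T y.

Definition bounded_op (T : E -> E) : Prop :=
  linear_op T /\ exists C : R, forall x, `|T x| <= C * `|x|.

Definition order_bounded (T : E -> E) : Prop :=
  forall a b, exists c d, forall x, le a x -> le x b ->
    le c (T x) /\ le (T x) d.

Definition disjoint_preserving (T : E -> E) : Prop :=
  forall x y, disjoint x y -> disjoint (T x) (T y).

Definition weakly_cvg (u : nat -> E) (x : E) : Prop :=
  forall f : E -> R, (forall (a : R) y z, f (a *: y + z) = a * f y + f z) ->
    continuous f -> (fun n => f (u n)) @ \oo --> f x.

Definition uaw_cvg (u : nat -> E) (x : E) : Prop :=
  forall v, le 0 v -> weakly_cvg (fun n => lmeet (labs (u n - x)) v) 0.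

Definition norm_bounded_seq (u : nat -> E) : Prop :=
  exists M : R, forall n, `|u n| <= M.

Definition uaw_DP (T : E -> E) : Prop :=
  bounded_op T /\
  forall u : nat -> E, norm_bounded_seq u -> uaw_cvg u 0 ->
    (fun n => `|T (u n)|) @ \oo --> (0 : R).

Definition op_le (S S' : E -> E) : Prop :=
  forall x, le 0 x -> le (S x) (S' x).

(* S is the modulus |T| = T \/ (-T), the supremum being taken in the
   ordered vector space L_b(E) of order bounded (linear) operators *)
Definition is_modulus (S T : E -> E) : Prop :=
  [/\ linear_op S, order_bounded S,
      op_le T S, op_le (fun x => - T x) S
    & forall S', linear_op S' -> order_bounded S' ->
        op_le T S' -> op_le (fun x => - T x) S' -> op_le S S'].

End BanachLattice.

(* Main.v *)
Require Import Defs.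
From HB Require Import structures.
From mathcomp Require Import all_boot all_order all_algebra.
From mathcomp Require Import all_classical all_reals all_analysis.
From mathcomp Require Import ring lra.
Import Order.TTheory GRing.Theory Num.Theory.
Import numFieldNormedType.Exports.
Local Open Scope classical_set_scope.
Local Open Scope ring_scope.

Section RL.
Variables (R : realType) (E : completeNormedModType R).
Variables (le : E -> E -> Prop) (join : E -> E -> E).
Hypothesis HE : is_banach_lattice le join.

Lemma leR x : le x x. Proof. by case: HE => h _ _ _ _; apply: h. Qed.
Lemma leA x y : le x y -> le y x -> x = y. Proof. by case: HE => _ h _ _ _; apply: h. Qed.
Lemma leT {x y z} : le x y -> le y z -> le x z. Proof. by case: HE => _ _ h _ _; apply: h. Qed.
Lemma jl x y : le x (join x y). Proof. by case: HE => _ _ _ h _; case: (h x y). Qed.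
Lemma jr x y : le y (join x y). Proof. by case: HE => _ _ _ h _; case: (h x y) => _ []. Qed.
Lemma jlub {x y z} : le x z -> le y z -> le (join x y) z.
Proof. by case: HE => _ _ _ h _; case: (h x y) => _ [] _; apply. Qed.
Lemma leD {x y} z : le x y -> le (x + z) (y + z). Proof. by case: HE => _ _ _ _ [] h _ _; apply: h. Qed.
Lemma leZ (a : R) {x y} : 0 <= a -> le x y -> le (a *: x) (a *: y).
Proof. by case: HE => _ _ _ _ [] _ h _; apply: h. Qed.
Lemma normL {x y} : le (labs join x) (labs join y) -> `|x| <= `|y|.
Proof. by case: HE => _ _ _ _ [] _ _ h; apply: h. Qed.

Lemma leDl {x y} z : le x y -> le (z + x) (z + y).
Proof. by rewrite ![z + _]addrC; apply: leD. Qed.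
Lemma leD2 {a b c d} : le a b -> le c d -> le (a + c) (b + d).
Proof. move=> h1 h2; apply: leT (leD c h1) (leDl b h2). Qed.
Lemma leN {x y} : le x y -> le (- y) (- x).
Proof.
move=> h; have := leD (- x - y) h.
by rewrite addrA subrr add0r addrCA subrr addr0.
Qed.
Lemma le_subr {x y} : le x y -> le 0 (y - x).
Proof. by move=> h; have := leD (- x) h; rewrite subrr. Qed.
Lemma subr_le {x y} : le 0 (y - x) -> le x y.
Proof. by move=> h; have := leD x h; rewrite add0r subrK. Qed.
Lemma le_eq x y : x = y -> le x y. Proof. by move=> ->; apply: leR. Qed.

Lemma joinC x y : join x y = join y x.
Proof. by apply: leA; apply: jlub; (apply: jl || apply: jr). Qed.
Lemma join_l {x y} : le y x -> join x y = x.
Proof. by move=> h; apply: leA; [apply: jlub => //; apply: leR | apply: jl]. Qed.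
Lemma join_mono {a b c d} : le a b -> le c d -> le (join a c) (join b d).
Proof. by move=> h1 h2; apply: jlub; [apply: leT h1 (jl _ _) | apply: leT h2 (jr _ _)]. Qed.
Lemma joinD x y z : join x y + z = join (x + z) (y + z).
Proof.
apply: leA; last by apply: jlub; apply: leD; [apply: jl | apply: jr].
apply: subr_le; apply: le_subr.
suff h : le (join x y) (join (x + z) (y + z) - z).
  by have := leD z h; rewrite subrK.
apply: jlub.
- by have := leD (- z) (jl (x + z) (y + z)); rewrite addrK.
- by have := leD (- z) (jr (x + z) (y + z)); rewrite addrK.
Qed.
Lemma joinZ (a : R) x y : 0 <= a -> a *: join x y = join (a *: x) (a *: y).
Proof.
rewrite le0r => /orP [/eqP -> | ha]; first by rewrite !scale0r join_l //; apply: leR.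
apply: leA; last by apply: jlub; apply: leZ; rewrite ?ltW //; [apply: jl | apply: jr].
have hb : 0 <= a^-1 by rewrite invr_ge0 ltW.
suff h : le (join x y) (a^-1 *: join (a *: x) (a *: y)).
  by have := leZ _ (ltW ha) h; rewrite scalerA divff ?gt_eqF // scale1r.
apply: jlub.
- by have := leZ _ hb (jl (a *: x) (a *: y)); rewrite scalerA mulVf ?gt_eqF // scale1r.
- by have := leZ _ hb (jr (a *: x) (a *: y)); rewrite scalerA mulVf ?gt_eqF // scale1r.
Qed.

Notation meet := (lmeet join).
Lemma ml x y : le (meet x y) x.
Proof. rewrite /lmeet; have := leN (jl (- x) (- y)); by rewrite opprK. Qed.
Lemma mr x y : le (meet x y) y.
Proof. rewrite /lmeet; have := leN (jr (- x) (- y)); by rewrite opprK. Qed.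
Lemma mglb {x y z} : le z x -> le z y -> le z (meet x y).
Proof.
move=> h1 h2; rewrite /lmeet; rewrite -[z]opprK; apply: leN.
by apply: jlub; apply: leN.
Qed.
Lemma meetD x y z : meet x y + z = meet (x + z) (y + z).
Proof.
by rewrite /lmeet -[z]opprK -opprD joinD !opprK -!opprD.
Qed.
Lemma meet_mono {a b c d} : le a b -> le c d -> le (meet a c) (meet b d).
Proof. by move=> h1 h2; apply: mglb; [apply: leT (ml _ _) h1 | apply: leT (mr _ _) h2]. Qed.
Lemma add_jm x y : x + y = join x y + meet x y.
Proof.
have := joinD x y (- x - y).
have -> : x + (- x - y) = - y by rewrite addrA subrr add0r.
have -> : y + (- x - y) = - x by rewrite addrC -addrA [- y + y]addrC subrr addr0.
rewrite [join (- y) _]joinC => h.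
rewrite /lmeet -h opprD opprD !opprK.
by rewrite addrA subrr add0r.
Qed.

Notation abs := (labs join).
Lemma le_abs x : le x (abs x). Proof. exact: jl. Qed.
Lemma le_absN x : le (- x) (abs x). Proof. exact: jr. Qed.
Lemma abs_lub {x z} : le x z -> le (- x) z -> le (abs x) z. Proof. exact: jlub. Qed.
Lemma half_le0 (a : E) : le 0 (a + a) -> le 0 a.
Proof.
move=> h; have := leZ (2^-1 : R) (ltW _) h.
rewrite scaler0 scalerDr -scalerDl.
have -> : (2^-1 + 2^-1 : R) = 1.
  by field.
rewrite scale1r; apply; by rewrite invr_gt0 ltr0n.
Qed.
Lemma abs_ge0 x : le 0 (abs x).
Proof. apply: half_le0; have := leD2 (le_abs x) (le_absN x); by rewrite subrr. Qed.
Lemma absN x : abs (- x) = abs x. Proof. by rewrite /labs opprK joinC. Qed.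
Lemma le0N {p} : le 0 p -> le (- p) 0. Proof. by move=> h; have := leN h; rewrite oppr0. Qed.
Lemma abs_id {p} : le 0 p -> abs p = p.
Proof. move=> h; apply: join_l; apply: leT (le0N h) h. Qed.
Lemma absZ (a : R) x : 0 <= a -> abs (a *: x) = a *: abs x.
Proof. by move=> ha; rewrite /labs joinZ // scalerN. Qed.
Lemma abs_tri x y : le (abs (x + y)) (abs x + abs y).
Proof.
apply: abs_lub; first exact: leD2 (le_abs _) (le_abs _).
rewrite opprD; exact: leD2 (le_absN _) (le_absN _).
Qed.
Lemma abs_abs x : abs (abs x) = abs x. Proof. exact: abs_id (abs_ge0 x). Qed.
Lemma absB x y : abs (x - y) = abs (y - x). Proof. by rewrite -absN opprB. Qed.

Definition pos x := join x 0.
Definition neg x := join (- x) 0.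
Lemma pos_ge0 x : le 0 (pos x). Proof. exact: jr. Qed.
Lemma neg_ge0 x : le 0 (neg x). Proof. exact: jr. Qed.
Lemma pos_neg x : pos x = x + neg x.
Proof. by rewrite addrC /neg joinD addNr add0r joinC. Qed.
Lemma pos_sub x : pos x - neg x = x.
Proof. by rewrite pos_neg addrK. Qed.
Lemma meet_pos_neg x : meet (pos x) (neg x) = 0.
Proof.
have := meetD x 0 (neg x); rewrite add0r -pos_neg => <-.
by rewrite /lmeet oppr0; exact: addNr.
Qed.
Lemma pos_id x : le 0 x -> pos x = x. Proof. exact: join_l. Qed.
Lemma neg_id0 x : le 0 x -> neg x = 0.
Proof. by move=> h; rewrite /neg joinC join_l //; apply: le0N. Qed.
Lemma pos_le0 x : le x 0 -> pos x = 0.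
Proof. by move=> h; rewrite /pos joinC join_l. Qed.
Lemma disjoint_pn x : Defs.disjoint join (pos x) (neg x).
Proof. by rewrite /Defs.disjoint (abs_id (pos_ge0 x)) (abs_id (neg_ge0 x)) meet_pos_neg. Qed.
Lemma pos_diff a y : le 0 y -> le 0 (pos a - pos (a - y)) /\ le (pos a - pos (a - y)) y.
Proof.
move=> hy; split.
  apply: le_subr; apply: join_mono (leR _).
  by have := leDl (a - y) hy; rewrite addr0 subrK.
suff h : le (pos a) (pos (a - y) + y) by have := leD (- pos (a - y)) h; rewrite addrAC subrr add0r.
rewrite /pos joinD subrK add0r; exact: join_mono (leR _) hy.
Qed.

Section Op.
Variable T : E -> E.
Hypothesis hT : linear_op T.
Lemma T0 : T 0 = 0.
Proof. have := hT 1 0 0; rewrite !scale1r addr0 => h. by apply: (addrI (T 0)); rewrite addr0 -h. Qed.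
Lemma TD x y : T (x + y) = T x + T y.
Proof. by have := hT 1 x y; rewrite !scale1r. Qed.
Lemma TZ a x : T (a *: x) = a *: T x.
Proof. by have := hT a x 0; rewrite !addr0 T0 addr0. Qed.
Lemma TN x : T (- x) = - T x.
Proof. by rewrite -scaleN1r TZ scaleN1r. Qed.
Lemma TB x y : T (x - y) = T x - T y.
Proof. by rewrite TD TN. Qed.
End Op.
Arguments T0 {T}.
Arguments TD {T}.
Arguments TZ {T}.
Arguments TN {T}.
Arguments TB {T}.

Lemma ob_abs T : order_bounded le T -> forall y, exists w, le 0 w /\
  forall z, le 0 z -> le z y -> le (abs (T z)) w.
Proof.
move=> hT y; have [c [d h]] := hT 0 y.
exists (abs c + abs d); split.
  by have := leD2 (abs_ge0 c) (abs_ge0 d); rewrite addr0.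
move=> z h0 h1; have [h2 h3] := h z h0 h1.
apply: abs_lub.
  apply: leT h3 _; apply: leT (le_abs d) _.
  by have := leD (abs d) (abs_ge0 c); rewrite add0r.
apply: leT (leN h2) _; apply: leT (le_absN c) _.
by have := leDl (abs c) (abs_ge0 d); rewrite addr0.
Qed.

Lemma half_id (u : E) : (2^-1 : R) *: (u + u) = u.
Proof.
rewrite scalerDr -scalerDl.
have -> : (2^-1 + 2^-1 : R) = 1 by field.
by rewrite scale1r.
Qed.

Lemma comb Z K u h : le Z (K + (u + u)) -> le Z (K + (h + h)) ->
  le Z (K + (meet u h + meet u h)).
Proof.
move=> h1 h2.
have e : Z = K + (2^-1 *: (Z - K) + 2^-1 *: (Z - K)).
  by rewrite -scalerDr half_id addrC subrK.
have l1 : forall v, le Z (K + (v + v)) -> le (2^-1 *: (Z - K)) v.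
  move=> v hv; rewrite -[v]half_id; apply: leZ; first by rewrite invr_ge0.
  by have := leD (- K) hv; rewrite [X in le _ X]addrAC subrr add0r.
rewrite e; apply: leDl; apply: leD2; apply: mglb; by apply: l1.
Qed.

Arguments comb {Z K u h}.

Lemma core_ineq w v h p q : le 0 w -> le 0 p -> le 0 q -> meet p q = 0 ->
  le v (p + w) -> le h (p + q) -> le (meet (join w v) h) (join w p).
Proof.
move=> hw hp hq hpq hv hh.
have s1 : le (meet (join w v) h) (meet (p + w) (p + q)).
  apply: meet_mono hh; apply: jlub hv.
  by have := leD w hp; rewrite add0r.
apply: leT s1 _.
have -> : meet (p + w) (p + q) = p + meet w q.
  by rewrite [RHS]addrC meetD ![p + _]addrC.
rewrite add_jm.
have -> : meet p (meet w q) = 0.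
  apply: leA; first by rewrite -hpq; apply: meet_mono (leR p) (mr w q).
  by apply: mglb hp (mglb hw hq).
rewrite addr0; apply: jlub; first exact: jr.
exact: leT (ml w q) (jl w p).
Qed.

Lemma archi0 r w : le 0 r -> (forall n : nat, le (n%:R *: r) w) -> r = 0.
Proof.
move=> hr hn.
have hw : le 0 w by have := hn 0%N; rewrite scale0r.
have hN : forall n : nat, n%:R * `|r| <= `|w|.
  move=> n; have hnr : le 0 (n%:R *: r).
    by have := leZ (n%:R : R) (ler0n _ n) hr; rewrite scaler0.
  have := normL (x := n%:R *: r) (y := w).
  rewrite (abs_id hnr) (abs_id hw) normrZ ger0_norm ?ler0n //; apply; exact: hn.
apply/eqP; rewrite -normr_eq0; apply/negPn/negP => hne.
have hpos : 0 < `|r| by rewrite lt_def hne normr_ge0.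
have hb := archi_boundP (x := `|w| / `|r|) (divr_ge0 (normr_ge0 _) (normr_ge0 _)).
have := hN (Num.Def.archi_bound (`|w| / `|r|)).
rewrite -ler_pdivlMr // => hle.
by have := lt_le_trans hb hle; rewrite ltxx.
Qed.

Section Core.
Variable T : E -> E.
Hypotheses (hT : linear_op T) (hob : order_bounded le T)
  (hdp : disjoint_preserving join T).

Lemma core_bound x y (n : nat) w : le 0 x -> le x y -> le 0 w ->
  (forall z, le 0 z -> le z y -> le (abs (T z)) w) ->
  le (n%:R *: abs (T x) + n%:R *: abs (T (y - x)))
     (n%:R *: abs (T y) + (w + w)).
Proof.
move=> hx hxy hw0 hw.
set N : R := n%:R.
have hN : 0 <= N by apply: ler0n.
set X := N *: T x; set B := T y.
pose a (m : nat) := N *: x - m%:R *: y.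
pose P m := T (pos (a m)); pose Q m := T (neg (a m)).
set K := N *: abs B.
have hPQ m : P m - Q m = X - m%:R *: B.
  by rewrite /P /Q -(TB hT) pos_sub /a (TB hT) !(TZ hT).
have hdisj m : meet (abs (P m)) (abs (Q m)) = 0 by apply: hdp; apply: disjoint_pn.
have hstep m : le (abs (P m)) (abs (P m.+1) + w).
  have e : a m.+1 = a m - y.
    by rewrite /a -addn1 natrD scalerDl scale1r opprD addrA.
  have e2 : P m = P m.+1 + (P m - P m.+1) by rewrite addrC subrK.
  rewrite [X in le (abs X) _]e2; apply: leT (abs_tri _ _) _; apply: leDl.
  rewrite /P -(TB hT) e; have [d1 d2] := pos_diff (a m) _ (leT hx hxy).
  exact: hw.
have hQ0 : Q 0%N = 0.
  rewrite /Q /a scale0r subr0 neg_id0 ?(T0 hT) //.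
  by have := leZ N hN hx; rewrite scaler0.
have hPn : P n = 0.
  rewrite /P /a pos_le0 ?(T0 hT) //.
  rewrite -/N -scalerBr; have := leZ N hN (le_subr hxy).
  rewrite scaler0 => h; have := leN h; by rewrite oppr0 -scalerN opprB.
have hZm m : (m <= n)%N -> le (abs X + abs (N *: B - X))
      (K + (abs (P m - Q m) + abs (P m - Q m))).
  move=> hm; rewrite hPQ; set h := X - m%:R *: B.
  have e1 : X = m%:R *: B + h by rewrite /h addrC subrK.
  have e2 : N *: B - X = (n - m)%:R *: B - h.
    by rewrite /h natrB // scalerBl opprB addrA subrK.
  have l1 : le (abs X) (m%:R *: abs B + abs h).
    by rewrite {1}e1 -absZ ?ler0n //; apply: abs_tri.
  have l2 : le (abs (N *: B - X)) ((n - m)%:R *: abs B + abs h).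
    by rewrite e2 -absZ ?ler0n // -(absN h); apply: abs_tri.
  apply: leT (leD2 l1 l2) _; apply: le_eq.
  rewrite /K /N natrB // scalerBl.
  by rewrite addrACA; congr (_ + _); rewrite addrC subrK.
have claim k : (k <= n)%N -> le (abs X + abs (N *: B - X))
      (K + (join w (abs (P k)) + join w (abs (P k)))).
  elim: k => [|k IH] hk.
    apply: leT (hZm 0%N hk) _; rewrite hQ0 subr0; apply: leDl.
    by apply: leD2; apply: jr.
  have h1 := IH (ltnW hk).
  have h2 := hZm k.+1 hk.
  have := comb h1 h2 => h3; apply: leT h3 _; apply: leDl.
  have hc : le (meet (join w (abs (P k))) (abs (P k.+1 - Q k.+1)))
              (join w (abs (P k.+1))).
    apply: core_ineq => //; try exact: abs_ge0.
    by apply: leT (abs_tri _ _) _; rewrite absN; apply: leR.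
  exact: (leD2 hc hc).
have := claim n (leqnn n).
rewrite hPn (abs_id (leR 0)) (join_l hw0).
rewrite /X /B absZ // -scalerBr -(TB hT).
by rewrite absZ.
Qed.

Lemma core x y : le 0 x -> le x y -> abs (T y) = abs (T x) + abs (T (y - x)).
Proof.
move=> hx hxy.
have [w [hw0 hw]] := ob_abs _ hob y.
set r := abs (T x) + abs (T (y - x)) - abs (T y).
have hr : le 0 r.
  apply: le_subr; have -> : T y = T x + T (y - x) by rewrite -(TD hT) addrC subrK.
  exact: abs_tri.
suff : r = 0 by move/eqP; rewrite subr_eq0 => /eqP ->.
apply: (archi0 _ (w + w)) => // n.
have := core_bound _ _ n _ hx hxy hw0 hw.
move=> h; have := leD (- (n%:R *: abs (T y))) h.
rewrite [X in le _ X]addrC addKr /r scalerBr scalerDr; by [].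
Qed.
End Core.

Lemma nnZ (a : R) z : 0 <= a -> le 0 z -> le 0 (a *: z).
Proof. by move=> ha hz; have := leZ a ha hz; rewrite scaler0. Qed.
Lemma nnD p q : le 0 p -> le 0 q -> le 0 (p + q).
Proof. by move=> hp hq; have := leD2 hp hq; rewrite addr0. Qed.
Lemma abs_pn x : abs x = pos x + neg x.
Proof.
rewrite add_jm meet_pos_neg addr0.
apply: leA.
  apply: jlub; [apply: leT (jl x 0) (jl _ _) | apply: leT (jl (- x) 0) (jr _ _)].
apply: jlub; apply: jlub; rewrite ?abs_ge0 //;
  [exact: le_abs | exact: abs_ge0 | exact: le_absN | exact: abs_ge0].
Qed.


Section Mod.
Variable T : E -> E.
Hypotheses (hT : linear_op T) (hob : order_bounded le T)
  (hdp : disjoint_preserving join T).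

Definition Phi z := abs (T z).
Lemma Phi_add x z : le 0 x -> le 0 z -> Phi (x + z) = Phi x + Phi z.
Proof.
move=> hx hz; rewrite /Phi (core _ hT hob hdp x (x + z)) //.
  by rewrite [x + z]addrC addrK.
by have := leDl x hz; rewrite addr0.
Qed.
Lemma Phi_Z a z : 0 <= a -> Phi (a *: z) = a *: Phi z.
Proof. by move=> ha; rewrite /Phi (TZ hT) absZ. Qed.
Lemma Phi0 : Phi 0 = 0.
Proof. by rewrite /Phi (T0 hT) (abs_id (leR 0)). Qed.

Definition Smod x := Phi (pos x) - Phi (neg x).

Lemma S_decomp p q : le 0 p -> le 0 q -> Smod (p - q) = Phi p - Phi q.
Proof.
move=> hp hq; set x := p - q.
have e : pos x + q = p + neg x by rewrite pos_neg /x addrAC subrK.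
have e2 : Phi (pos x) + Phi q = Phi p + Phi (neg x).
  by rewrite -(Phi_add _ _ (pos_ge0 x) hq) -(Phi_add _ _ hp (neg_ge0 x)) e.
rewrite /Smod -(addrK (Phi q) (Phi (pos x))) e2 addrAC addrK //.
Qed.

Lemma S_N x : Smod (- x) = - Smod x.
Proof.
rewrite /Smod opprB.
have -> : pos (- x) = neg x by [].
by rewrite /neg opprK.
Qed.

Lemma S_lin_pos (a : R) x y : 0 <= a -> Smod (a *: x + y) = a *: Smod x + Smod y.
Proof.
move=> ha.
have e : a *: x + y = (a *: pos x + pos y) - (a *: neg x + neg y).
  by rewrite -{1}(pos_sub x) -{1}(pos_sub y) scalerBr opprD addrACA.
have hpx := pos_ge0 x; have hnx := neg_ge0 x.
have hpy := pos_ge0 y; have hny := neg_ge0 y.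
rewrite e S_decomp; last 2 first.
- by apply: nnD => //; apply: nnZ.
- by apply: nnD => //; apply: nnZ.
rewrite !Phi_add //; try by apply: nnZ.
rewrite !Phi_Z // /Smod.
by rewrite scalerBr opprD addrACA.
Qed.

Lemma S_lin : linear_op Smod.
Proof.
move=> a x y; have [ha|ha] := leP 0 a; first exact: S_lin_pos.
have -> : a *: x = (- a) *: (- x) by rewrite scaleNr scalerN opprK.
rewrite S_lin_pos; last by rewrite oppr_ge0 ltW.
by rewrite S_N scaleNr scalerN opprK.
Qed.

Lemma S_pos z : le 0 z -> Smod z = Phi z.
Proof. by move=> hz; rewrite /Smod pos_id // neg_id0 // Phi0 subr0. Qed.

Lemma S_ob : order_bounded le Smod.
Proof.
move=> a b; exists (Smod a), (Smod b) => x h1 h2.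
have hs : forall u v, le u v -> le (Smod u) (Smod v).
  move=> u v huv; apply: subr_le; rewrite -(TB S_lin) S_pos; first exact: abs_ge0.
  exact: le_subr.
by split; apply: hs.
Qed.

Lemma S_abs x : le (abs (Smod x)) (abs (T (abs x))).
Proof.
have -> : abs (T (abs x)) = Phi (pos x) + Phi (neg x).
  by rewrite -(Phi_add _ _ (pos_ge0 x) (neg_ge0 x)) -abs_pn.
apply: leT (abs_tri _ _) _; rewrite absN /Phi !abs_abs; exact: leR.
Qed.

Lemma norm_abs x : `|abs x| = `|x|.
Proof. by apply/eqP; rewrite eq_le !normL // abs_abs; apply: leR. Qed.

Lemma S_modulus : is_modulus le Smod T.
Proof.
split.
- exact: S_lin.
- exact: S_ob.
- by move=> x hx; rewrite S_pos //; apply: le_abs.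
- by move=> x hx; rewrite S_pos //; apply: le_absN.
- move=> S' _ _ h1 h2 x hx; rewrite S_pos //; apply: abs_lub; [exact: h1 | exact: h2].
Qed.

Lemma S_uaw : uaw_DP le join T -> uaw_DP le join Smod.
Proof.
move=> [[_ [C hC]] hu]; split.
  split; first exact: S_lin.
  exists C => x; apply: le_trans (normL (S_abs x)) _.
  by rewrite -(norm_abs x); apply: hC.
move=> u [M hM] hcv.
have hv := hu (fun n => abs (u n)).
have : (fun n => `|T (abs (u n))|) @ \oo --> (0 : R).
  apply: hv.
    by exists M => n; rewrite norm_abs.
  move=> v0 hv0.
  have -> : (fun n => lmeet join (labs join (abs (u n) - 0)) v0)
          = (fun n => lmeet join (labs join (u n - 0)) v0).
    by apply: funext => n; rewrite !subr0 abs_abs.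
  exact: hcv.
move=> hT'.
apply: (squeeze_cvgr _ (cvg_cst 0) hT').
near=> n; rewrite normr_ge0 /=.
exact: normL (S_abs (u n)).
Unshelve. all: by end_near.
Qed.
End Mod.
End RL.

Theorem theorem2p37 (R : realType) (E : completeNormedModType R)
  (le : E -> E -> Prop) (join : E -> E -> E)
  (HE : is_banach_lattice le join) (T : E -> E) :
  bounded_op T -> order_bounded le T -> disjoint_preserving join T ->
  uaw_DP le join T ->
  exists S : E -> E, is_modulus le S T /\ uaw_DP le join S.
Proof.
move=> hTb hob hdp huaw.
have hT : linear_op T by case: hTb.
exists (@Smod R E join T); split.
- exact: (S_modulus _ _ _ _ HE _ hT hob hdp).
- exact: (S_uaw _ _ _ _ HE _ hT hob hdp huaw).
Qed.
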